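(* Let $a_n$ be the number of Dyck paths of semilength $n\ge 1$ in which every descent has odd length, and let $g_0(z)=\sum_{n\ge1}a_n z^{2n}$. Then $$g_0=\frac{z\,v_1}{v_1^2-z^2}.$$ Moreover, writing $Z=z^2$, $g_0$ is a power series in $Z$ satisfying $$g_0=\frac{Z(1+g_0)}{1-Z^2(1+g_0)^2},\qquad\text{equivalently}\qquad Z^2g_0^3+2Z^2g_0^2-(1-Z-Z^2)\,g_0+Z=0,$$ so that $g_0=Z+Z^2+2Z^3+5Z^4+12Z^5+30Z^6+79Z^7+\cdots$.
   Context: A Dyck path is a finite sequence of up-steps $(1,1)$ and down-steps $(1,-1)$ starting at height $0$, never going below height $0$, and ending at height $0$; its semilength is half its number of steps. Only nonempty paths are considered. A descent is a maximal run of consecutive down-steps; its length is the number of down-steps in it. Let $v_1=v_1(z)$ denote the unique root $u$ of the cubic $$z u^3+(z^2-1)u^2-z^3u+z^2=0$$ which is a Laurent series in $z$ with $z\,v_1(z)\to1$ as $z\to0$. Its expansion begins $v_1=\frac1z-z-z^5-2z^7-4z^9-10z^{11}-\cdots$. The other two roots of the cubic tend to $0$ as $z\to0$. *)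

(* Defs.v *)
From mathcomp Require Import all_boot all_order all_algebra.
Set Implicit Arguments. Unset Strict Implicit. Unset Printing Implicit Defensive.
Import GRing.Theory Num.Theory.
Local Open Scope ring_scope.

(** * Dyck paths, encoded as boolean words: true = up-step, false = down-step *)

Fixpoint dyck_from (h : nat) (s : seq bool) : bool :=
  match s with
  | [::] => h == 0%N
  | true :: s' => dyck_from h.+1 s'
  | false :: s' => (0 < h)%N && dyck_from h.-1 s'
  end.

Definition is_dyck (s : seq bool) : bool := dyck_from 0 s.

Fixpoint descents_aux (cur : nat) (s : seq bool) : seq nat :=
  match s with
  | [::] => if (0 < cur)%N then [:: cur] else [::]
  | false :: s' => descents_aux cur.+1 s'
  | true :: s' => if (0 < cur)%N then cur :: descents_aux 0 s' else descents_aux 0 s'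
  end.

Definition descents (s : seq bool) : seq nat := descents_aux 0 s.

Definition a_count (n : nat) : nat :=
  #|[pred t : (n.*2).-tuple bool | is_dyck t && all odd (descents t)]|.

Definition fps := nat -> rat.

Definition fps_const (c : rat) : fps := fun n => if n == 0%N then c else 0.
Definition fps_X : fps := fun n => if n == 1%N then 1 else 0.
Definition fps_add (f g : fps) : fps := fun n => f n + g n.
Definition fps_opp (f : fps) : fps := fun n => - f n.
Definition fps_sub (f g : fps) : fps := fps_add f (fps_opp g).
Definition fps_mul (f g : fps) : fps :=
  fun n => \sum_(i < n.+1) f i * g (n - i)%N.
Definition fps_pow (f : fps) (k : nat) : fps := iter k (fps_mul f) (fps_const 1).

Declare Scope fps_scope.
Delimit Scope fps_scope with F.
Infix "+" := fps_add : fps_scope.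
Infix "-" := fps_sub : fps_scope.
Infix "*" := fps_mul : fps_scope.
Notation "f ^+ k" := (fps_pow f k) : fps_scope.

Definition g0_z : fps :=
  fun m => if odd m || (m == 0%N) then 0 else (a_count m./2)%:R.

(* the same series as a power series in Z = z^2: sum_{n>=1} a_n Z^n *)
Definition g0_Z : fps := fun n => if n == 0%N then 0 else (a_count n)%:R.

(* Main.v *)
From HB Require Import structures.
Require Import Defs.
From mathcomp Require Import all_boot all_order all_algebra.
From mathcomp Require Import boolp.
From mathcomp Require Import zify ring.
Import GRing.Theory.
Fixpoint words (m : nat) : seq (seq bool) :=
  if m is m'.+1 then map (cons true) (words m') ++ map (cons false) (words m')
  else [:: [::]].

Lemma consI (b : bool) : injective (cons b).
Proof. by move=> x y []. Qed.

Lemma mem_words m s : (s \in words m) = (size s == m).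
Proof.
elim: m s => [|m IH] s.
  by case: s.
rewrite /= mem_cat; case: s => [|b s] /=.
  by apply/negbTE; rewrite negb_or; apply/andP; split; apply/negP => /mapP [].
rewrite eqSS -IH; case: b.
  rewrite (mem_map (consI true)).
  by apply/orb_idr => /mapP [].
rewrite (mem_map (consI false)).
by apply/orb_idl => /mapP [].
Qed.

Lemma uniq_words m : uniq (words m).
Proof.
elim: m => //= m IH; rewrite cat_uniq !map_inj_uniq ?IH //=; try exact: consI.
rewrite andbT; apply/hasPn => s /mapP [x _ ->]; apply/negP => /mapP [y _].
by [].
Qed.

Lemma count_sum (T : Type) (a : pred T) (s : seq T) :
  count a s = \sum_(x <- s) (a x : nat).
Proof. by elim: s => [|x s IH]; rewrite ?big_nil ?big_cons //= IH. Qed.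

Lemma count_words_cat (P : pred (seq bool)) a b :
  count P (words (a + b)) = \sum_(x <- words a) count (fun y => P (x ++ y)) (words b).
Proof.
elim: a P => [|a IH] P; first by rewrite big_seq1.
rewrite addSn /= count_cat !count_map big_cat !big_map /=.
by rewrite (IH (preim (cons true) P)) (IH (preim (cons false) P)).
Qed.

Lemma card_tuples m (P : pred (seq bool)) :
  #|[pred t : m.-tuple bool | P t]| = count P (words m).
Proof.
rewrite cardE /enum_mem size_filter -enumT.
rewrite (@eq_count _ _ (preim val P)) // -count_map.
apply/permP; apply: uniq_perm.
- by rewrite map_inj_uniq ?enum_uniq //; apply: val_inj.
- exact: uniq_words.
move=> s; rewrite mem_words; apply/mapP/idP.
  by case=> t _ ->; rewrite size_tuple.
move=> /eqP h; exists (Tuple (introT eqP h)) => //; exact: mem_enum.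
Qed.

Fixpoint walk (h : nat) (s : seq bool) : option nat :=
  match s with
  | [::] => Some h
  | true :: s' => walk h.+1 s'
  | false :: s' => if h is h'.+1 then walk h' s' else None
  end.

Lemma dyck_walk h s : dyck_from h s = (walk h s == Some 0%N).
Proof. by elim: s h => [|[] s IH] [|h] //=; rewrite IH. Qed.

Lemma walk_cat h s t : walk h (s ++ t) = obind (fun k => walk k t) (walk h s).
Proof. by elim: s h => [|[] s IH] [|h] //=. Qed.

Lemma walk_shift h s k d : walk h s = Some k -> walk (h + d) s = Some (k + d).
Proof.
elim: s h => [|[] s IH] h /=; first by case=> ->.
  by move/IH; rewrite addSn.
by case: h => // h /IH.
Qed.

Lemma walk_drop h s : walk h.+1 s = Some 0%N -> walk h s = None.
Proof.
elim: s h => [|[] s IH] h //=; first by move/IH.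
by case: h => // h /IH.
Qed.

Lemma walk_parity h s k : walk h s = Some k -> ~~ odd (h + size s + k).
Proof.
elim: s h => [|[] s IH] h /=.
- by case=> ->; rewrite addn0 addnn odd_double.
- by move/IH; rewrite addSnnS.
- case: h => // h /IH; rewrite !addSn /= addnS /=.
  by rewrite negbK.
Qed.

Lemma dyck_even s : walk 0 s = Some 0%N -> ~~ odd (size s).
Proof. by move/walk_parity; rewrite add0n addn0. Qed.

Lemma first_passage {n s h} : (size s <= n)%N -> walk h.+1 s = Some 0%N ->
  exists u v, s = u ++ false :: v /\ walk 0 u = Some 0%N /\ walk h v = Some 0%N.
Proof.
elim: n s h => [|n IH] [|[] s] h //= hs.
- move=> hw; have [u [v [es [hu hv]]]] := IH s h.+1 hs hw; subst s.
  have hv' : (size v <= n)%N.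
    by move: hs; rewrite size_cat /=; lia.
  have [u' [v' [-> [hu' hv'']]]] := IH v h hv' hv.
  exists (true :: u ++ false :: u'), v'; split; first by rewrite /= -catA.
  split => //=; rewrite walk_cat.
  by have := @walk_shift _ _ _ 1 hu; rewrite /= => ->.
- by move=> hw; exists [::], s.
Qed.

Lemma last_arch {s} : walk 0 s = Some 0%N -> s != [::] ->
  exists x y, s = x ++ true :: rcons y false /\ walk 0 x = Some 0%N /\ walk 0 y = Some 0%N.
Proof.
move: {2}(size s) (leqnn (size s)) => n; elim: n s => [|n IH] [|[] s] //= hs hw _.
have [u [v [es [hu hv]]]] := first_passage (leqnn (size s)) hw; subst s.
clear hw; case: v hv hs => [|b v] hv hs.
  by exists [::], u; rewrite cats1.
have hsz : (size (b :: v) <= n)%N.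
  by move: hs; rewrite size_cat /=; lia.
have [x [y [e [hx hy]]]] := IH _ hsz hv isT.
exists (true :: u ++ false :: x), y; split; first by rewrite e /= -catA.
split => //=; rewrite walk_cat.
by have := @walk_shift _ _ _ 1 hu; rewrite /= => ->.
Qed.

Lemma arch_dyck x y : walk 0 x = Some 0%N -> walk 0 y = Some 0%N ->
  walk 0 (x ++ true :: rcons y false) = Some 0%N.
Proof.
move=> hx hy; rewrite walk_cat hx /= -cats1 walk_cat.
by have := @walk_shift _ _ _ 1 hy; rewrite /= => ->.
Qed.

Lemma arch_uniq_aux {x1 y1 x2 y2} :
  x1 ++ true :: rcons y1 false = x2 ++ true :: rcons y2 false -> (size x1 < size x2)%N ->
  walk 0 x1 = Some 0%N -> walk 0 x2 = Some 0%N -> walk 0 y1 = Some 0%N -> False.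
Proof.
move=> e lt hx1 hx2 hy1.
have ex1 : take (size x1) x2 = x1.
  have := congr1 (take (size x1)) e.
  by rewrite take_size_cat // take_cat lt.
have ed := congr1 (drop (size x1)) e.
rewrite drop_size_cat // drop_cat lt in ed.
move: hx2; rewrite -(cat_take_drop (size x1) x2) ex1.
have : (0 < size (drop (size x1) x2))%N by rewrite size_drop subn_gt0.
move: ed; case: (drop (size x1) x2) => [|b w] //= [eb ey] _.
subst b; rewrite walk_cat hx1 /= => hw.
have ey' : rcons y1 false = rcons (w ++ true :: y2) false by rewrite ey rcons_cat.
have ey'' := rcons_injl false ey'.
by move: hy1; rewrite ey'' walk_cat (@walk_drop 0 _ hw).
Qed.

Lemma arch_uniq {x1 y1 x2 y2} :
  x1 ++ true :: rcons y1 false = x2 ++ true :: rcons y2 false ->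
  walk 0 x1 = Some 0%N -> walk 0 x2 = Some 0%N -> walk 0 y1 = Some 0%N ->
  walk 0 y2 = Some 0%N -> x1 = x2.
Proof.
move=> e hx1 hx2 hy1 hy2.
case: (ltngtP (size x1) (size x2)) => c.
- by case: (arch_uniq_aux e c hx1 hx2 hy1).
- by case: (arch_uniq_aux (esym e) c hx2 hx1 hy2).
have := congr1 (take (size x1)) e.
by rewrite take_size_cat // c take_size_cat.
Qed.

Definition okc (c : nat) : bool := (c == 0%N) || odd c.

Fixpoint AO (p : nat -> bool) (c : nat) (s : seq bool) : bool :=
  match s with
  | [::] => p c
  | false :: s' => AO p c.+1 s'
  | true :: s' => okc c && AO p 0 s'
  end.

Lemma descAO c s : all odd (descents_aux c s) = AO okc c s.
Proof.
elim: s c => [|[] s IH] c /=.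
- by case: c => //= c; rewrite andbT.
- by case: c => [|c] //=; rewrite IH.
- by rewrite IH.
Qed.

Lemma AO_ext p q c s : p =1 q -> AO p c s = AO q c s.
Proof. by move=> e; elim: s c => [|[] s IH] c //=; rewrite IH. Qed.

Lemma AO_cat_true p c s t : AO p c (s ++ true :: t) = AO okc c s && AO p 0 t.
Proof. by elim: s c => [|[] s IH] c //=; rewrite IH // andbA. Qed.

Lemma AO_rcons_false p c s : AO p c (rcons s false) = AO (fun c => p c.+1) c s.
Proof. by elim: s c => [|[] s IH] c //=; rewrite IH. Qed.

Lemma AO_arch p x y :
  AO p 0 (x ++ true :: rcons y false) = AO okc 0 x && AO (fun c => p c.+1) 0 y.
Proof. by rewrite AO_cat_true AO_rcons_false. Qed.

Definition dy (s : seq bool) : bool := walk 0 s == Some 0%N.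
Definition Gp (s : seq bool) : bool := dy s && AO okc 0 s.
Definition Hp (s : seq bool) : bool := dy s && AO (fun c => ~~ odd c) 0 s.
Definition Op (s : seq bool) : bool := dy s && AO odd 0 s.

Definition pB (B : pred (seq bool)) (t : seq bool) : bool :=
  match t with
  | true :: t' => (match rev t' with false :: r => B (rev r) | _ => false end)
  | _ => false
  end.

Lemma pB_arch B y : pB B (true :: rcons y false) = B y.
Proof. by rewrite /= rev_rcons revK. Qed.

Lemma pB_spec B t : pB B t -> exists y, t = true :: rcons y false /\ B y.
Proof.
case: t => [|[] t] //=.
case E: (rev t) => [|[] r] // hB; exists (rev r); split => //.
by rewrite -rev_cons -E revK.
Qed.

Section Conv.
Variables (A B P : pred (seq bool)).
Hypothesis hA : forall x, A x -> dy x.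
Hypothesis hB : forall x, B x -> dy x.
Hypothesis hPd : forall s, P s -> dy s.
Hypothesis hP : forall x y, dy x -> dy y -> P (x ++ true :: rcons y false) = A x && B y.

Lemma conv_word s : s != [::] ->
  (P s : nat) = \sum_(j < (size s).+1) (A (take j s) && pB B (drop j s) : nat).
Proof.
move=> sn.
have key : forall j : 'I_(size s).+1, A (take j s) && pB B (drop j s) ->
   exists y, s = take j s ++ true :: rcons y false /\ dy (take j s) /\ dy y /\ A (take j s) /\ B y.
  move=> j /andP [ha /pB_spec [y [ey hb]]]; exists y.
  by rewrite -ey cat_take_drop; do !split => //; [apply: hA | apply: hB].
case hs: (P s).
  have := hPd _ hs; rewrite /dy => /eqP hd.
  have [x [y [es [hx hy]]]] := last_arch hd sn.
  have lx : (size x < (size s).+1)%N by rewrite es size_cat ltnS leq_addr.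
  rewrite (bigD1 (Ordinal lx)) //= big1 ?addn0.
    have ht : take (size x) s = x by rewrite es take_size_cat.
    have hd' : drop (size x) s = true :: rcons y false by rewrite es drop_size_cat.
    rewrite ht hd' pB_arch.
    by move: hs; rewrite es hP ?/dy ?hx ?hy // => ->.
  move=> j nj; apply/eqP; rewrite eqb0; apply/negP => /key [y' [e' [d1 [d2 _]]]].
  move/eqP: nj; apply; apply: val_inj => /=.
  have e'' : take j s ++ true :: rcons y' false = x ++ true :: rcons y false.
    by rewrite -e'.
  have ex := arch_uniq e'' (eqP d1) hx (eqP d2) hy.
  rewrite -ex size_take; case: ltnP => // hh.
  by apply/eqP; rewrite eqn_leq hh -ltnS ltn_ord.
rewrite big1 // => j _; apply/eqP; rewrite eqb0; apply/negP => /key [y [e [d1 [d2 [ha hb]]]]].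
by move: hs; rewrite e hP // ha hb.
Qed.
Lemma conv_count m : count P (words m.+1) =
  \sum_(j < m.+2) count A (words j) * count (pB B) (words (m.+1 - j)).
Proof.
transitivity (\sum_(s <- words m.+1) \sum_(j < m.+2) (A (take j s) && pB B (drop j s) : nat)).
  rewrite count_sum [LHS]big_seq [RHS]big_seq; apply: eq_bigr => s.
  rewrite mem_words => /eqP hs; rewrite conv_word ?hs //.
  by rewrite -size_eq0 hs.
rewrite exchange_big; apply: eq_bigr => j _.
rewrite -(@count_sum _ (fun s => A (take j s) && pB B (drop j s))).
have hj : (j <= m.+1)%N by rewrite -ltnS.
have -> : words m.+1 = words (j + (m.+1 - j)) by rewrite subnKC.
rewrite count_words_cat count_sum big_distrl /= [LHS]big_seq [RHS]big_seq.
apply: eq_bigr => x; rewrite mem_words => /eqP hx.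
rewrite (@eq_count _ _ (fun y => A x && pB B y)); last first.
  by move=> y /=; rewrite take_size_cat // drop_size_cat.
by case: (A x) => /=; rewrite ?mul1n ?mul0n ?count_pred0.
Qed.
End Conv.

Lemma count_pB0 B : count (pB B) (words 0) = 0%N.
Proof. by []. Qed.
Lemma count_pB1 B : count (pB B) (words 1) = 0%N.
Proof. by []. Qed.
Lemma count_pB2 B k : count (pB B) (words k.+2) = count B (words k).
Proof.
have -> : k.+2 = (1 + (k + 1))%N by rewrite add1n addn1.
rewrite count_words_cat /= big_cons big_cons big_nil /= count_words_cat.
rewrite count_words_cat [X in (_ + (X + _))%N]big1 // !addn0 count_sum.
apply: eq_bigr => x _ /=.
by rewrite !cats1 !rev_rcons revK addn0.
Qed.

Lemma count_odd (A : pred (seq bool)) : (forall x, A x -> dy x) -> forall n, count A (words n.*2.+1) = 0%N.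
Proof.
move=> hA n; rewrite -(count_pred0 (words n.*2.+1)); apply: eq_in_count => s.
rewrite mem_words => /eqP hs /=; apply/negbTE/negP => /hA /eqP /dyck_even.
by rewrite hs /= odd_double.
Qed.

Lemma sum_split (h : nat -> nat) N :
  \sum_(i < N.*2.+1) h i = (\sum_(k < N.+1) h k.*2 + \sum_(k < N) h k.*2.+1)%N.
Proof.
elim: N => [|N IH]; first by rewrite /= !big_ord_recr !big_ord0 /= !add0n addn0.
rewrite doubleS [LHS]big_ord_recr [in LHS]big_ord_recr /= IH.
rewrite [\sum_(k < N.+2) _]big_ord_recr [\sum_(k < N.+1) h k.*2.+1]big_ord_recr /=.
rewrite doubleS; lia.
Qed.

Lemma semi_conv (A B P : pred (seq bool)) :
  (forall x, A x -> dy x) -> (forall x, B x -> dy x) -> (forall s, P s -> dy s) ->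
  (forall x y, dy x -> dy y -> P (x ++ true :: rcons y false) = A x && B y) ->
  forall n, count P (words n.+1.*2) =
    \sum_(k < n.+1) count A (words k.*2) * count B (words (n - k).*2).
Proof.
move=> hA hB hPd hP n.
rewrite doubleS (@conv_count A B P hA hB hPd hP) big_ord_recr big_ord_recr /= subnn count_pB0 subSnn count_pB1.
rewrite !muln0 !addn0.
rewrite (eq_bigr (fun j : 'I_(n.*2.+1) => count A (words j) * count B (words (n.*2 - j)))%N); last first.
  move=> j _ /=; rewrite !subSn ?count_pB2 //; first by rewrite -ltnS.
  by apply: leqW; rewrite -ltnS.
rewrite (sum_split (fun j => count A (words j) * count B (words (n.*2 - j))))%N.
rewrite [X in (_ + X)%N]big1 ?addn0; last by move=> k _; rewrite (@count_odd A hA) mul0n.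
by apply: eq_bigr => k _; rewrite -doubleB.
Qed.

Lemma dy_arch x y : dy x -> dy y -> dy (x ++ true :: rcons y false).
Proof. by rewrite /dy => /eqP hx /eqP hy; rewrite arch_dyck. Qed.

Lemma Gp_arch x y : dy x -> dy y -> Gp (x ++ true :: rcons y false) = Gp x && Hp y.
Proof.
move=> hx hy; rewrite /Gp /Hp dy_arch // hx hy AO_arch /=.
by congr (_ && _); apply: AO_ext => c; rewrite /okc /=.
Qed.

Lemma Hp_arch x y : dy x -> dy y -> Hp (x ++ true :: rcons y false) = Gp x && Op y.
Proof.
move=> hx hy; rewrite /Gp /Hp /Op dy_arch // hx hy AO_arch /=.
by congr (_ && _); apply: AO_ext => c /=; rewrite negbK.
Qed.

Lemma Op_arch x y : dy x -> dy y -> Op (x ++ true :: rcons y false) = Gp x && Hp y.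
Proof.
move=> hx hy; rewrite /Gp /Hp /Op dy_arch // hx hy AO_arch /=.
by congr (_ && _); apply: AO_ext => c /=.
Qed.

Lemma Gp_dy s : Gp s -> dy s. Proof. by case/andP. Qed.
Lemma Hp_dy s : Hp s -> dy s. Proof. by case/andP. Qed.
Lemma Op_dy s : Op s -> dy s. Proof. by case/andP. Qed.

Definition SG n := count Gp (words n.*2).
Definition SH n := count Hp (words n.*2).
Definition SO n := count Op (words n.*2).

Lemma recG n : SG n.+1 = \sum_(k < n.+1) SG k * SH (n - k).
Proof. rewrite /SG /SH; exact: (@semi_conv Gp Hp Gp Gp_dy Hp_dy Gp_dy Gp_arch). Qed.
Lemma recH n : SH n.+1 = \sum_(k < n.+1) SG k * SO (n - k).
Proof. rewrite /SG /SH /SO; exact: (@semi_conv Gp Op Hp Gp_dy Op_dy Hp_dy Hp_arch). Qed.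
Lemma recO n : SO n.+1 = \sum_(k < n.+1) SG k * SH (n - k).
Proof. rewrite /SG /SH /SO; exact: (@semi_conv Gp Hp Op Gp_dy Hp_dy Op_dy Op_arch). Qed.

Lemma a_countE n : a_count n = SG n.
Proof.
rewrite /a_count (card_tuples _ (fun s => is_dyck s && all odd (descents s))).
by apply: eq_count => s; rewrite /Gp /dy /is_dyck dyck_walk /descents descAO.
Qed.

Lemma values : [seq (if n == 0%N then 0%N else SO n) | n <- iota 0 8] = [:: 0; 1; 1; 2; 5; 12; 30; 79]%N.
Proof. by vm_compute. Qed.

Local Open Scope ring_scope.

Definition F : Type := fps.
HB.instance Definition _ := gen_eqMixin F.
HB.instance Definition _ := gen_choiceMixin F.

Lemma fps_addA : associative (fps_add : F -> F -> F).
Proof. by move=> f g h; apply: funext => n; rewrite /fps_add addrA. Qed.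
Lemma fps_addC : commutative (fps_add : F -> F -> F).
Proof. by move=> f g; apply: funext => n; rewrite /fps_add addrC. Qed.
Lemma fps_add0 : left_id (fps_const 0 : F) fps_add.
Proof. by move=> f; apply: funext => n; rewrite /fps_add /fps_const; case: eqP => _; rewrite add0r. Qed.
Lemma fps_addN : left_inverse (fps_const 0 : F) fps_opp fps_add.
Proof. by move=> f; apply: funext => n; rewrite /fps_add /fps_opp /fps_const addNr; case: eqP. Qed.

HB.instance Definition _ := GRing.isZmodule.Build F fps_addA fps_addC fps_add0 fps_addN.

Definition tr (n : nat) (f : fps) : {poly rat} := \poly_(i < n.+1) f i.

Lemma coef_tr n f i : (i <= n)%N -> (tr n f)`_i = f i.
Proof. by move=> le; rewrite /tr coef_poly ltnS le. Qed.

Definition approx n (f : fps) (P : {poly rat}) := forall i, (i <= n)%N -> f i = P`_i.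

Lemma approx_tr n f : approx n f (tr n f).
Proof. by move=> i le; rewrite coef_tr. Qed.

Lemma approx_mul n f g P Q : approx n f P -> approx n g Q -> approx n (fps_mul f g) (P * Q).
Proof.
move=> hf hg i le; rewrite coefM /fps_mul; apply: eq_bigr => j _.
have lj : (j <= n)%N by apply: leq_trans le; rewrite -ltnS.
by rewrite hf // hg // (leq_trans (leq_subr _ _) le).
Qed.

Lemma approx_add n f g P Q : approx n f P -> approx n g Q -> approx n (fps_add f g) (P + Q).
Proof. by move=> hf hg i le; rewrite coefD /fps_add hf ?hg. Qed.

Lemma approx_const n c : approx n (fps_const c) c%:P.
Proof. by move=> i _; rewrite coefC /fps_const. Qed.

Lemma approx_eq n f g P : approx n f P -> approx n g P -> f n = g n.
Proof. by move=> hf hg; rewrite hf // hg. Qed.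

Lemma fps_mulA : associative (fps_mul : F -> F -> F).
Proof.
move=> f g h; apply: funext => n; apply: (@approx_eq n _ _ (tr n f * tr n g * tr n h)).
  by rewrite -mulrA; do !apply: approx_mul; apply: approx_tr.
by do !apply: approx_mul; apply: approx_tr.
Qed.

Lemma fps_mulC : commutative (fps_mul : F -> F -> F).
Proof.
move=> f g; apply: funext => n; apply: (@approx_eq n _ _ (tr n f * tr n g)).
  by do !apply: approx_mul; apply: approx_tr.
by rewrite mulrC; do !apply: approx_mul; apply: approx_tr.
Qed.

Lemma fps_mul1 : left_id (fps_const 1 : F) fps_mul.
Proof.
move=> f; apply: funext => n; apply: (@approx_eq n _ _ (1%:P * tr n f)).
  by apply: approx_mul; [apply: approx_const|apply: approx_tr].
by rewrite mul1r; apply: approx_tr.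
Qed.

Lemma fps_mulDl : left_distributive (fps_mul : F -> F -> F) fps_add.
Proof.
move=> f g h; apply: funext => n; apply: (@approx_eq n _ _ ((tr n f + tr n g) * tr n h)).
  by do ?[apply: approx_mul|apply: approx_add]; apply: approx_tr.
by rewrite mulrDl; do ?[apply: approx_mul|apply: approx_add]; apply: approx_tr.
Qed.

Lemma fps_one_neq0 : (fps_const 1 : F) != fps_const 0.
Proof. apply/eqP => /(congr1 (fun f : fps => f 0%N)); rewrite /fps_const /=. by move/eqP; rewrite oner_eq0. Qed.

HB.instance Definition _ := GRing.Zmodule_isComNzRing.Build F fps_mulA fps_mulC fps_mul1 fps_mulDl fps_one_neq0.


Lemma fps_addE (f g : F) : fps_add f g = f + g. Proof. by []. Qed.
Lemma fps_mulE (f g : F) : fps_mul f g = f * g. Proof. by []. Qed.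
Lemma fps_oppE (f : F) : fps_opp f = - f. Proof. by []. Qed.
Lemma fps_subE (f g : F) : fps_sub f g = f - g. Proof. by []. Qed.
Lemma fps_const0 : fps_const 0 = (0 : F). Proof. by []. Qed.
Lemma fps_const1 : fps_const 1 = (1 : F). Proof. by []. Qed.
Lemma fps_powE (f : F) k : fps_pow f k = f ^+ k.
Proof. by elim: k => [|k IH] //=; rewrite exprS -IH. Qed.
Lemma fps_const_add a b : fps_const (a + b) = (fps_const a : F) + (fps_const b : F).
Proof. apply: funext => n; rewrite -fps_addE /fps_add /fps_const; case: (n == 0%N); rewrite ?addr0 //. Qed.
Lemma fps_const_nat n : fps_const n%:R = (n%:R : F).
Proof. by elim: n => [|n IH] //; rewrite !mulrS fps_const_add IH. Qed.

Definition toF := (fps_subE, fps_addE, fps_mulE, fps_oppE, fps_powE, fps_const0, fps_const1).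

Lemma Xmul (f : F) n : ((fps_X : F) * f) n = if n is n'.+1 then f n' else 0.
Proof.
rewrite -fps_mulE /fps_mul big_ord_recl /fps_X /= mul0r add0r.
case: n => [|n]; first by rewrite big_ord0.
rewrite big_ord_recl /= mul1r big1 ?addr0; first by rewrite /bump /= subn1.
move=> i _.
by rewrite /bump /= mul0r.
Qed.

Definition ser (S : nat -> nat) : F := fun n => (S n)%:R.

Lemma ser_rec (S A B : nat -> nat) :
  (forall n, S n.+1 = \sum_(k < n.+1) A k * B (n - k))%N ->
  ser S = (fps_const (S 0%N)%:R : F) + (fps_X : F) * (ser A * ser B).
Proof.
move=> h; apply: funext => n; rewrite -fps_addE /fps_add Xmul /fps_const.
case: n => [|n] /=; first by rewrite addr0.
rewrite add0r /ser h natr_sum; apply: eq_bigr => k _; by rewrite natrM.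
Qed.

Definition spread (f : F) : F := fun m => if odd m then 0 else f m./2.

Lemma spreadD (f g : F) : spread (f + g) = spread f + spread g.
Proof. apply: funext => m; rewrite -!fps_addE /fps_add /spread; by case: ifP; rewrite ?addr0. Qed.

Lemma spreadN (f : F) : spread (- f) = - spread f.
Proof. apply: funext => m; rewrite -!fps_oppE /fps_opp /spread; by case: ifP; rewrite ?oppr0. Qed.

Lemma spread1 : spread 1 = 1.
Proof.
apply: funext => m; rewrite -fps_const1 /spread /fps_const.
case: m => [|m] //; case: ifP => // om; case: eqP => // h2.
by move: (odd_double_half m.+1); rewrite om h2.
Qed.

Lemma sum_split_rat (h : nat -> rat) N :
  \sum_(i < N.*2.+1) h i = \sum_(k < N.+1) h k.*2 + \sum_(k < N) h k.*2.+1.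
Proof.
elim: N => [|N IH]; first by rewrite /= !big_ord_recr !big_ord0 /= !add0r addr0.
rewrite doubleS [LHS]big_ord_recr [in LHS]big_ord_recr /= IH.
rewrite [\sum_(k < N.+2) _]big_ord_recr [\sum_(k < N.+1) h k.*2.+1]big_ord_recr /=.
rewrite doubleS; ring.
Qed.

Lemma spreadM (f g : F) : spread (f * g) = spread f * spread g.
Proof.
apply: funext => m; rewrite -!fps_mulE /fps_mul /spread.
case: ifP => om.
  rewrite big1 // => i _; case: ifP => oi; first by rewrite mul0r.
  rewrite oddB ?om ?oi //; first by rewrite mulr0.
  by rewrite -ltnS.
have [n em] : exists n, m = n.*2.
  by exists m./2; move: (odd_double_half m); rewrite om add0n.
subst m; rewrite doubleK (sum_split_rat (fun i => (if odd i then 0 else f i./2) * (if odd (n.*2 - i) then 0 else g (n.*2 - i)./2))) [X in _ + X]big1 ?addr0; last first.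
  by move=> k _; rewrite /= odd_double /= mul0r.
apply: eq_bigr => k _; by rewrite odd_double -doubleB odd_double !doubleK.
Qed.

Lemma spread_pow (f : F) k : spread (f ^+ k) = spread f ^+ k.
Proof. by elim: k => [|k IH]; rewrite ?expr0 ?spread1 // !exprS spreadM IH. Qed.

Lemma spreadX : spread fps_X = (fps_X : F) * fps_X.
Proof.
apply: funext => m; rewrite Xmul /spread /fps_X.
case: m => [|[|[|m]]] //=.
rewrite negbK; case: ifP => // om.
case: eqP => // h; exfalso; move: h.
by case: m om => [|m'] //=.
Qed.

Lemma spread0 (f : F) : spread f 0%N = f 0%N. Proof. by []. Qed.

Lemma c0D (f g : F) : (f + g) 0%N = f 0%N + g 0%N. Proof. by []. Qed.
Lemma c0N (f : F) : (- f) 0%N = - f 0%N. Proof. by []. Qed.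
Lemma c0M (f g : F) : (f * g) 0%N = f 0%N * g 0%N.
Proof. by rewrite -fps_mulE /fps_mul big_ord1. Qed.
Lemma c01 : (1 : F) 0%N = 1. Proof. by []. Qed.
Lemma c0X : (fps_X : F) 0%N = 0. Proof. by []. Qed.
Lemma c0exp (f : F) k : (f ^+ k) 0%N = f 0%N ^+ k.
Proof. by elim: k => [|k IH]; rewrite ?expr0 // !exprS c0M IH. Qed.

Lemma fps_cancel (a b : F) : a * b = 0 -> b 0%N != 0 -> a = 0.
Proof.
move=> hab hb.
suff h : forall n i, (i <= n)%N -> a i = 0.
  by apply: funext => n; rewrite (h n n) // -fps_const0 /fps_const; case: eqP.
elim=> [|n IH] i.
  rewrite leqn0 => /eqP ->; have := congr1 (fun f : F => f 0%N) hab.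
  rewrite c0M /= -fps_const0 /fps_const /= => /eqP; rewrite mulf_eq0 (negbTE hb) orbF.
  by move/eqP.
rewrite leq_eqVlt => /orP [/eqP ->|]; last by rewrite ltnS; apply: IH.
have := congr1 (fun f : F => f n.+1) hab.
rewrite -fps_mulE /fps_mul big_ord_recr /= big1 ?add0r ?subnn.
  rewrite -fps_const0 /fps_const /= => /eqP; rewrite mulf_eq0 (negbTE hb) orbF.
  by move/eqP.
by move=> i' _; rewrite IH ?mul0r // -ltnS.
Qed.

Lemma spread_0 : spread 0 = 0.
Proof. apply: funext => m; rewrite /spread -!fps_const0 /fps_const; by do !case: ifP. Qed.

Definition sG : F := ser SG.
Definition sH : F := ser SH.
Definition sO : F := ser SO.
Definition XF : F := fps_X.

Lemma eG : sG = 1 + XF * (sG * sH).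
Proof. by rewrite /sG {1}(@ser_rec _ _ _ recG) fps_const_nat. Qed.
Lemma eH : sH = 1 + XF * (sG * sO).
Proof. by rewrite /sH {1}(@ser_rec _ _ _ recH) fps_const_nat. Qed.
Lemma eO : sO = XF * (sG * sH).
Proof. by rewrite /sO {1}(@ser_rec _ _ _ recO) fps_const_nat add0r. Qed.

Lemma GO : sG = 1 + sO.
Proof. by rewrite {1}eG -eO. Qed.

Lemma g0ZE : g0_Z = sO.
Proof.
apply: funext => n; rewrite /g0_Z /sO /ser.
case: n => [|n] //=; by rewrite a_countE recG -recO.
Qed.

Lemma g0zE : g0_z = spread sO.
Proof.
apply: funext => m; rewrite /g0_z /spread -g0ZE /g0_Z.
case om: (odd m) => /=; first by [].
case: eqP => [-> //|mn].
case: eqP => // h; exfalso; apply: mn.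
by move: (odd_double_half m); rewrite om h.
Qed.

Definition WF : F := 1 - XF * sH.

Lemma E1 : sO - XF * ((1 + sO) * sH) = 0.
Proof. by rewrite -GO {1}eO subrr. Qed.
Lemma E2 : sH - (1 + XF * ((1 + sO) * sO)) = 0.
Proof. by rewrite -GO {1}eH subrr. Qed.

Lemma Cz : sO - XF ^+ 2 * (1 + sO) ^+ 2 * sO - XF * (1 + sO) = 0.
Proof.
rewrite (_ : _ - _ = (sO - XF * ((1 + sO) * sH)) + XF * (1 + sO) * (sH - (1 + XF * ((1 + sO) * sO)))).
  by rewrite E1 E2 mulr0 addr0.
ring.
Qed.

Lemma Dz : WF * (1 + sO) - 1 = 0.
Proof. rewrite -E1 /WF; ring. Qed.

Lemma TW : WF ^+ 3 + (XF - 1) * WF ^+ 2 - XF ^+ 2 * WF + XF ^+ 2 = 0.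
Proof.
set T := (X in X = 0).
have -> : T = - (WF * (1 + sO) - 1) * (1 + WF * (1 + sO) + (WF * (1 + sO)) ^+ 2) * T
   + WF ^+ 3 * (- (sO - XF ^+ 2 * (1 + sO) ^+ 2 * sO - XF * (1 + sO))
      + (WF * (1 + sO) - 1) * ((WF * (1 + sO)) ^+ 2 + WF * (1 + sO) + 1
          + (XF - 1) * (1 + sO) * (WF * (1 + sO) + 1) - XF ^+ 2 * (1 + sO) ^+ 2)).
  rewrite /T; ring.
by rewrite Dz Cz; ring.
Qed.

Lemma ZW : sO * (WF ^+ 2 - XF ^+ 2) = XF * WF.
Proof.
apply/eqP; rewrite -subr_eq0; apply/eqP.
have -> : sO * (WF ^+ 2 - XF ^+ 2) - XF * WF = WF ^+ 2 * (sO - XF ^+ 2 * (1 + sO) ^+ 2 * sO - XF * (1 + sO))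
   + (WF * (1 + sO) - 1) * (XF ^+ 2 * sO * (WF * (1 + sO) + 1) + XF * WF).
  ring.
by rewrite Dz Cz; ring.
Qed.

Lemma spreadXF : spread XF = XF * XF. Proof. exact: spreadX. Qed.

Definition spr := (spreadD, spreadN, spreadM, spread_pow, spread1, spread_0).

Lemma cub_u : spread WF ^+ 3 + (XF ^+ 2 - 1) * spread WF ^+ 2 - XF ^+ 4 * spread WF + XF ^+ 4 = 0.
Proof.
have := congr1 spread TW; rewrite !spr /XF spreadX => <-; ring.
Qed.

Lemma u0 : spread WF 0%N = 1.
Proof. by rewrite spread0 /WF c0D c0N c0M c01 /XF c0X mul0r oppr0 addr0. Qed.

Lemma seqvals : [seq SO n | n <- iota 0 8] = [:: 0; 1; 1; 2; 5; 12; 30; 79]%N.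
Proof. by vm_compute. Qed.

Theorem mainTheorem1 :
  (exists w : fps, w 0%N = 1 /\
     (w ^+ 3 + (fps_X ^+ 2 - (fps_const 1)) * w ^+ 2 - fps_X ^+ 4 * w + fps_X ^+ 4)%F
       = (fps_const 0)%F) /\
  (forall w : fps, w 0%N = 1 ->
     (w ^+ 3 + (fps_X ^+ 2 - (fps_const 1)) * w ^+ 2 - fps_X ^+ 4 * w + fps_X ^+ 4)%F
       = (fps_const 0)%F ->
     (g0_z * (w ^+ 2 - fps_X ^+ 4))%F = (fps_X ^+ 2 * w)%F) /\
  (g0_Z * ((fps_const 1) - fps_X ^+ 2 * ((fps_const 1) + g0_Z) ^+ 2))%F
     = (fps_X * ((fps_const 1) + g0_Z))%F /\
  (fps_X ^+ 2 * g0_Z ^+ 3 + (fps_const 2) * fps_X ^+ 2 * g0_Z ^+ 2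
     - ((fps_const 1) - fps_X - fps_X ^+ 2) * g0_Z + fps_X)%F = (fps_const 0)%F /\
  [seq g0_Z n | n <- iota 0 8] = [:: 0; 1; 1; 2; 5; 12; 30; 79].
Proof.
split.
  exists (spread WF); split; first exact: u0.
  rewrite !toF; exact: cub_u.
split.
  move=> w hw0; rewrite !toF => hc.
  set u := spread WF.
  set Q : F := (w : F) ^+ 2 + (w : F) * u + u ^+ 2 + (XF ^+ 2 - 1) * ((w : F) + u) - XF ^+ 4.
  have hwu : ((w : F) - u) * Q = 0.
    have -> : ((w : F) - u) * Q = ((w : F) ^+ 3 + ((fps_X : F) ^+ 2 - 1) * (w : F) ^+ 2 - (fps_X : F) ^+ 4 * (w : F) + (fps_X : F) ^+ 4)
        - (u ^+ 3 + (XF ^+ 2 - 1) * u ^+ 2 - XF ^+ 4 * u + XF ^+ 4).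
      rewrite /Q /XF; ring.
    by rewrite hc cub_u subrr.
  have hQ : Q 0%N != 0.
    rewrite /Q !(c0D, c0N, c0M, c0exp) hw0 /u u0 c01 /XF c0X.
    by apply/eqP => /eqP; rewrite (_ : _ + _ = 1) ?oner_eq0 //; ring.
  have := @fps_cancel _ _ hwu hQ; move/eqP; rewrite subr_eq0 => /eqP ->.
  rewrite g0zE /u /WF.
  have := congr1 spread ZW; rewrite /WF !spr spreadXF => h.
  apply: (@subr0_eq F).
  transitivity (spread sO * ((1 - XF * XF * spread sH) ^+ 2 - (XF * XF) ^+ 2)
      - XF * XF * (1 - XF * XF * spread sH) : F).
    rewrite /XF; ring.
  by rewrite h subrr.
split.
  rewrite !toF g0ZE; apply: (@subr0_eq F).
  rewrite -[RHS]Cz /XF; ring.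
split.
  rewrite !toF fps_const_nat g0ZE; apply: (@subr0_eq F).
  transitivity (- (sO - XF ^+ 2 * (1 + sO) ^+ 2 * sO - XF * (1 + sO))).
    rewrite /XF; ring.
  by rewrite Cz oppr0.
rewrite g0ZE.
have -> : [seq sO n | n <- iota 0 8] = [seq (k%:R : rat) | k <- [seq SO n | n <- iota 0 8]].
  by rewrite -map_comp.
by rewrite seqvals.
Qed.
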